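(* In the standing setting, $g(Q)=Q'$, i.e. $\{g(A): A\in Q\}$ equals the set of nonempty down-sets of $(P',\preceq')$.
   Context: Standing setting: $(P,\preceq)$ is a finite poset with a bottom and a top element; $f:P\to P'$ is a surjective map onto $P'=f(P)$; $f^{-1}(a')=\{a\in P: f(a)=a'\}$; the relation $\preceq'$ on $P'$ is defined by $b'\preceq' a'$ iff there exist $a\in f^{-1}(a')$, $b\in f^{-1}(b')$ with $b\preceq a$. Assume the three conditions: (D) for all $a',b'\in P'$ with $b'\preceq' a'$ and every $a\in f^{-1}(a')$ there is $b\in f^{-1}(b')$ with $b\preceq a$; (U) for all $a',b'\in P'$ with $b'\preceq' a'$ and every $b\in f^{-1}(b')$ there is $a\in f^{-1}(a')$ with $b\preceq a$; (S) for all $a,b,c\in P$, if $c\preceq b\preceq a$ and $f(c)=f(a)$ then $f(b)=f(a)$. (Then $(P',\preceq')$ is a poset.) A down-set of a poset is a subset $A$ such that $a\in A$ and $b\preceq a$ imply $b\in A$. $Q$ is the set of nonempty down-sets of $(P,\preceq)$ and $Q'$ the set of nonempty down-sets of $(P',\preceq')$, each ordered by inclusion. $g:2^P\to 2^{P'}$ is $g(A)=\{f(a):a\in A\}$; we write $g(Q)=\{g(A):A\in Q\}$. *)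

(* Defs.v *)
From mathcomp Require Import all_boot.
Set Implicit Arguments. Unset Strict Implicit. Unset Printing Implicit Defensive.

Definition is_poset (T : finType) (le : rel T) : Prop :=
  [/\ reflexive le, antisymmetric le & transitive le].

Definition lift_rel (P P' : finType) (f : P -> P') (le : rel P) : rel P' :=
  fun b' a' => [exists a : P, exists b : P, [&& f a == a', f b == b' & le b a]].

Definition downset (T : finType) (le : rel T) (A : {set T}) : bool :=
  [forall a in A, forall b : T, le b a ==> (b \in A)].

Definition nonempty_downsets (T : finType) (le : rel T) : {set {set T}} :=
  [set A : {set T} | (A != set0) && downset le A].

Definition gmap (P P' : finType) (f : P -> P') (A : {set P}) : {set P'} := f @: A.

Definition cond_D (P P' : finType) (f : P -> P') (le : rel P) : Prop :=
  forall a' b' : P', lift_rel f le b' a' ->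
    forall a : P, f a = a' -> exists b : P, f b = b' /\ le b a.
Definition cond_U (P P' : finType) (f : P -> P') (le : rel P) : Prop :=
  forall a' b' : P', lift_rel f le b' a' ->
    forall b : P, f b = b' -> exists a : P, f a = a' /\ le b a.
Definition cond_S (P P' : finType) (f : P -> P') (le : rel P) : Prop :=
  forall a b c : P, le c b -> le b a -> f c = f a -> f b = f a.

(* Main.v *)
Require Import Defs.
From mathcomp Require Import all_boot.

Theorem lemma4 (P P' : finType) (le : rel P) (f : P -> P')
  (hposet : is_poset le)
  (hbot : exists bot : P, forall x : P, le bot x)
  (htop : exists top : P, forall x : P, le x top)
  (hsurj : forall a' : P', exists a : P, f a = a')
  (hD : cond_D f le) (hU : cond_U f le) (hS : cond_S f le) :
  [set gmap f A | A in nonempty_downsets le] = nonempty_downsets (lift_rel f le).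
Proof.
apply/setP => B; apply/imsetP/idP.
- move=> [A]; rewrite !inE => /andP[An /forallP Ad] ->.
  apply/andP; split.
    case/set0Pn: An => a Ha; apply/set0Pn; exists (f a); exact: imset_f.
  apply/forallP => a'; apply/implyP => /imsetP[a Ha ->].
  apply/forallP => b'; apply/implyP => hl.
  have [b [<- hb]] := hD _ _ hl a erefl.
  apply: imset_f.
  by move: (Ad a) => /implyP /(_ Ha) /forallP /(_ b) /implyP; apply.
- rewrite inE => /andP[Bn /forallP Bd].
  exists (f @^-1: B).
    rewrite inE; apply/andP; split.
      case/set0Pn: Bn => a' Ha'; have [a Ha] := hsurj a'.
      apply/set0Pn; exists a; by rewrite inE Ha.
    apply/forallP => a; apply/implyP; rewrite inE => Ha.
    apply/forallP => b; apply/implyP => hba; rewrite inE.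
    move: (Bd (f a)) => /implyP /(_ Ha) /forallP /(_ (f b)) /implyP; apply.
    by apply/existsP; exists a; apply/existsP; exists b; rewrite !eqxx hba.
  apply/setP => a'; apply/idP/imsetP.
    move=> Ha'; have [a Ha] := hsurj a'.
    by exists a; rewrite // inE Ha.
  by move=> [a]; rewrite inE => H ->.
Qed.
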